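(* Let $\bar x=1/x$ and let $Y=Y(t;x)$ be the unique formal power series in $t$ (with coefficients in $\mathbb{Q}[x,\bar x]$) satisfying $$Y=t(1+\bar x)(1+Y)(x+Y).$$ Let $$R(x,Y)=Y(x+1-\bar x^{5}-\bar x^{6})+Y^2(\bar x^{5}-\bar x)+Y^3(\bar x^{3}+\bar x^{6}-\bar x-\bar x^{4})+Y^4(\bar x^{3}-\bar x^{5}).$$ Then the series $E(u,v)$ defined below satisfies $$E(1+x,1+x)=\mathop{\mathrm{PT}}_{x}R(x,Y),$$ where $\mathop{\mathrm{PT}}_x$ extracts the non-negative powers of $x$ in a series of $\mathbb{Q}[x,\bar x][[t]]$.
   Context: $\mathbf{I}_n(\geq,\geq,-)$ is the set of inversion sequences $e=(e_1,\ldots,e_n)$ ($0\leq e_i<i$) with no $i<j<k$ such that $e_i\geq e_j\geq e_k$. An entry $e_i$ is a left-to-right maximum if $e_i>e_j$ for all $j<i$. Let $\alpha(e)=\max_i e_i$ and $\beta(e)$ the largest element of $\{e_i: e_i\text{ not a left-to-right maximum}\}\cup\{-1\}$; the parameters of $e$ are $(p,q)=(\alpha(e)-\beta(e),\,n-\alpha(e))$. Define $E(u,v)=\sum_{n\geq1}\sum_{e\in\mathbf{I}_n(\geq,\geq,-)}u^{p(e)}v^{q(e)}t^n$, where $(p(e),q(e))$ are the parameters of $e$; it is the series solution of $\bigl(1+\frac{tv}{1-u}+\frac{tv}{1-v/u}\bigr)E(u,v)=tuv+\frac{tv}{1-u}E(1,v)+\frac{tv}{1-v/u}E(u,u)$.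 *)

(* Defs.v *)
From HB Require Import structures.
From mathcomp Require Import all_boot all_order all_algebra fraction.
Set Implicit Arguments.
Unset Strict Implicit.
Unset Printing Implicit Defensive.
Import Order.TTheory GRing.Theory Num.Theory.
Local Open Scope ring_scope.

(* Q[x, xbar] is embedded in F = Q(x); series in t are functions nat -> F
   (n |-> coefficient of t^n). *)
Notation F := {fraction {poly rat}}.
Definition toF (p : {poly rat}) : F := FracField.tofrac p.
Definition xF : F := toF 'X.
Definition xbF : F := xF^-1.

Definition series := nat -> F.
Definition sconst (c : F) : series := fun n => if n is 0 then c else 0.
Definition sadd (a b : series) : series := fun n => a n + b n.
Definition sscale (c : F) (a : series) : series := fun n => c * a n.
Definition smul (a b : series) : series :=
  fun n => \sum_(i < n.+1) a i * b (n - i)%N.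
Definition stimes_t (a : series) : series :=
  fun n => if n is m.+1 then a m else 0.

Definition Y_eq (Y : series) : Prop :=
  forall n, Y n = stimes_t (sscale (1 + xbF)
                   (smul (sadd (sconst 1) Y) (sadd (sconst xF) Y))) n.

Definition Rser (Y : series) : series :=
  let Y2 := smul Y Y in let Y3 := smul Y2 Y in let Y4 := smul Y3 Y in
  sadd (sadd (sscale (xF + 1 - xbF ^+ 5 - xbF ^+ 6) Y)
             (sscale (xbF ^+ 5 - xbF) Y2))
       (sadd (sscale (xbF ^+ 3 + xbF ^+ 6 - xbF - xbF ^+ 4) Y3)
             (sscale (xbF ^+ 3 - xbF ^+ 5) Y4)).

(* PT_x: p is the non-negative part of f, i.e. f = p + xbar * q(xbar)
   for some polynomial q (f a Laurent polynomial). *)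
Definition is_PT (f : F) (p : {poly rat}) : Prop :=
  exists q : {poly rat}, f = toF p + xbF * (map_poly (fun c : rat => toF c%:P) q).[xbF].

(* e = (e_0,...,e_{n-1}) with 0 <= e_i <= i  (i.e. e_{i+1} < i+1 in 1-indexing) *)
Definition is_invseq (n : nat) (e : {ffun 'I_n -> 'I_n}) : bool :=
  [forall i : 'I_n, (e i <= i)%N].

(* avoids the pattern (>=,>=,-): no i<j<k with e_i >= e_j >= e_k *)
Definition avoids_gege (n : nat) (e : {ffun 'I_n -> 'I_n}) : bool :=
  [forall i : 'I_n, forall j : 'I_n, forall k : 'I_n,
     ((i < j)%N && (j < k)%N) ==> ~~ ((e j <= e i)%N && (e k <= e j)%N)].

Definition ltrmax (n : nat) (e : {ffun 'I_n -> 'I_n}) (i : 'I_n) : bool :=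
  [forall j : 'I_n, (j < i)%N ==> (e j < e i)%N].

Definition alpha (n : nat) (e : {ffun 'I_n -> 'I_n}) : nat :=
  \max_(i : 'I_n) (e i : nat).
(* beta(e) + 1, where beta(e) = max of non-LTR-max values, or -1 *)
Definition beta1 (n : nat) (e : {ffun 'I_n -> 'I_n}) : nat :=
  \max_(i : 'I_n | ~~ ltrmax e i) (e i).+1.
(* parameters: p = alpha - beta = (alpha+1) - (beta+1) (>= 1), q = n - alpha *)
Definition par_p (n : nat) (e : {ffun 'I_n -> 'I_n}) : nat :=
  ((alpha e).+1 - beta1 e)%N.
Definition par_q (n : nat) (e : {ffun 'I_n -> 'I_n}) : nat :=
  (n - alpha e)%N.

(* [t^n] E(u,v) as a bivariate polynomial: outer variable u, inner v. *)
Definition Ecoef (n : nat) : {poly {poly rat}} :=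
  \sum_(e : {ffun 'I_n -> 'I_n} | [&& (0 < n)%N, is_invseq e & avoids_gege e])
     ('X ^+ par_p e * ('X ^+ par_q e)%:P).

(* evaluation P(a, b) of a bivariate polynomial at polynomials a (for u), b (for v) *)
Definition eval2 (P : {poly {poly rat}}) (a b : {poly rat}) : {poly rat} :=
  (map_poly (fun c : {poly rat} => c \Po b) P).[a].

(* Main.v *)
Require Import Defs.
From HB Require Import structures.
From mathcomp Require Import all_boot all_order all_algebra fraction.
From mathcomp Require Import ring zify.
Import Order.TTheory GRing.Theory Num.Theory.
Set Implicit Arguments.
Unset Strict Implicit.
Unset Printing Implicit Defensive.


Lemma nonltr m (e : {ffun 'I_m -> 'I_m}) j : ~~ ltrmax e j = [exists i : 'I_m, (i < j)%N && (e j <= e i)%N].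
Proof.
rewrite /ltrmax negb_forall; apply: eq_existsb => i.
by rewrite negb_imply -leqNgt.
Qed.

Lemma beta1_leP m (e : {ffun 'I_m -> 'I_m}) (k : nat) : reflect (forall i j : 'I_m, (i < j)%N -> (e j <= e i)%N -> (e j < k)%N)
  (beta1 e <= k)%N.
Proof.
apply: (iffP (bigmax_leqP _ _ _)) => h.
- move=> i j hij hle; apply: (h j); rewrite nonltr; apply/existsP; exists i.
  by rewrite hij.
- move=> j; rewrite nonltr => /existsP[i /andP[hij hle]]; exact: h hij hle.
Qed.

Lemma avoidP m (e : {ffun 'I_m -> 'I_m}) : reflect (forall i j l : 'I_m, (i < j)%N -> (j < l)%N ->
   ~~ ((e j <= e i)%N && (e l <= e j)%N)) (avoids_gege e).
Proof.
apply: (iffP forallP) => h.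
- move=> i j l hij hjl; move/forallP: (h i) => /(_ j) /forallP /(_ l).
  by rewrite hij hjl.
- move=> i; apply/forallP => j; apply/forallP => l; apply/implyP => /andP[hij hjl].
  exact: h.
Qed.

Section Comb.
Variable n : nat.
Local Notation w := (widen_ord (leqnSn n)).

Definition ext (e : {ffun 'I_n -> 'I_n}) (k : 'I_n.+1) : {ffun 'I_n.+1 -> 'I_n.+1} :=
  [ffun i => if unlift ord_max i is Some j then w (e j) else k].

Lemma ext_w e k (j : 'I_n) : ext e k (w j) = w (e j).
Proof.
rewrite ffunE.
have -> : w j = lift ord_max j by apply: val_inj; rewrite /= /bump leqNgt ltn_ord.
by rewrite liftK.
Qed.

Lemma ext_m e k : ext e k ord_max = k.
Proof. by rewrite ffunE unlift_none. Qed.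

Lemma ordS_cases (i : 'I_n.+1) : i = ord_max \/ exists j : 'I_n, i = w j.
Proof.
case: (ltngtP i n) => h.
- by right; exists (Ordinal h); apply: val_inj.
- by have := ltn_ord i; rewrite ltnS leqNgt h.
- by left; apply: val_inj.
Qed.

Lemma ord_lt (i : 'I_n.+1) : (i < n)%N -> exists j : 'I_n, i = w j.
Proof.
case: (ordS_cases i) => [->|//]; by rewrite /= ltnn.
Qed.

Lemma invseq_ext e k : is_invseq (ext e k) = is_invseq e.
Proof.
apply/forallP/forallP => h i.
- by have := h (w i); rewrite ext_w.
- case: (ordS_cases i) => [->|[j ->]].
  + by rewrite ext_m /= -ltnS.
  + by rewrite ext_w; exact: h.
Qed.

Lemma ltrmax_ext_w e k j : ltrmax (ext e k) (w j) = ltrmax e j.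
Proof.
apply/forallP/forallP => h i.
- by have := h (w i); rewrite !ext_w.
- apply/implyP => hij.
  have [i' ei] : exists i' : 'I_n, i = w i'
    by apply: ord_lt; apply: ltn_trans hij _; rewrite /= ltn_ord.
  subst i; rewrite !ext_w /=; exact: (implyP (h i') hij).
Qed.

Lemma ltrmax_ext_m e k : ltrmax (ext e k) ord_max = [forall j : 'I_n, (e j < k)%N].
Proof.
apply/forallP/forallP => h i.
- by have := h (w i); rewrite ext_w ext_m /= ltn_ord.
- apply/implyP => hij; have [i' ->] := ord_lt hij.
  by rewrite ext_w ext_m; apply: h.
Qed.

Lemma alpha_ext e k : alpha (ext e k) = maxn (alpha e) k.
Proof.
rewrite /alpha big_ord_recr /= ext_m; congr maxn.
by apply: eq_bigr => i _; rewrite ext_w.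
Qed.

Lemma beta1_ext e k : beta1 (ext e k) =
  maxn (beta1 e) (if [forall j : 'I_n, (e j < k)%N] then 0 else k.+1).
Proof.
rewrite /beta1 big_mkcond big_ord_recr /= -big_mkcond ltrmax_ext_m ext_m.
congr maxn; last by rewrite if_neg.
by apply: eq_big => [i|i _]; rewrite ?ltrmax_ext_w ?ext_w.
Qed.

Lemma avoid_ext e k : avoids_gege (ext e k) = avoids_gege e && (beta1 e <= k)%N.
Proof.
apply/avoidP/andP => [h|[/avoidP h1 /beta1_leP h2]].
- split.
  + apply/avoidP => i j l hij hjl.
    by have := h (w i) (w j) (w l) hij hjl; rewrite !ext_w.
  + apply/beta1_leP => i j hij hle; rewrite ltnNge; apply/negP => hk.
    have := h (w i) (w j) ord_max hij; rewrite /= ltn_ord !ext_w ext_m /= => /(_ isT).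
    by rewrite hle hk.
- move=> i j l hij hjl.
  have hjn : (j < n)%N by apply: leq_trans hjl _; rewrite -ltnS ltn_ord.
  have [j' ej] := ord_lt hjn.
  have [i' ei] := ord_lt (ltn_trans hij hjn).
  subst i j.
  case: (ordS_cases l) => [->|[l' el]].
  + rewrite !ext_w ext_m /=; apply/negP => /andP[hle hk].
    by have := h2 i' j' hij hle; rewrite ltnNge hk.
  + by subst l; rewrite !ext_w /=; apply: h1.
Qed.

Definition restr (e' : {ffun 'I_n.+1 -> 'I_n.+1}) : {ffun 'I_n -> 'I_n} :=
  [ffun j => insubd j (val (e' (w j)))].

Lemma ext_restr e' : is_invseq e' -> ext (restr e') (e' ord_max) = e'.
Proof.
move=> /forallP h; apply/ffunP => i.
case: (ordS_cases i) => [->|[j ->]]; first by rewrite ext_m.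
rewrite ext_w; apply: val_inj; rewrite /= ffunE val_insubd.
by rewrite (leq_ltn_trans (h (w j))) //= ltn_ord.
Qed.

Lemma restr_ext e k : restr (ext e k) = e.
Proof.
apply/ffunP => j; rewrite ffunE ext_w; apply: val_inj.
by rewrite val_insubd /= ltn_ord.
Qed.

Local Open Scope ring_scope.
Lemma decomp (R : nmodType) (F : {ffun 'I_n.+1 -> 'I_n.+1} -> R) :
  \sum_(e' | is_invseq e' && avoids_gege e') F e' =
  \sum_(e | is_invseq e && avoids_gege e) \sum_(k : 'I_n.+1 | (beta1 e <= k)%N) F (ext e k).
Proof.
rewrite pair_big_dep /=.
rewrite (reindex_onto (fun p => ext p.1 p.2) (fun e' => (restr e', e' ord_max))) /=.
- apply: eq_bigl => [[e k]] /=.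
  by rewrite restr_ext ext_m invseq_ext avoid_ext eqxx andbT andbA.
- by move=> e' /andP[h _]; apply: ext_restr.
Qed.

Lemma alpha_lt (e : {ffun 'I_n -> 'I_n}) : (0 < n)%N -> (alpha e < n)%N.
Proof.
move=> n0; have h : (alpha e <= n.-1)%N.
  by apply/bigmax_leqP => i _; rewrite -ltnS prednK // ltn_ord.
by apply: leq_ltn_trans h _; rewrite ltn_predL.
Qed.

Lemma beta1_le (e : {ffun 'I_n -> 'I_n}) : (beta1 e <= (alpha e).+1)%N.
Proof. by apply/bigmax_leqP => i _; rewrite ltnS; apply: leq_bigmax. Qed.

Lemma forall_lt (e : {ffun 'I_n -> 'I_n}) (k : nat) : (0 < n)%N -> [forall j : 'I_n, (e j < k)%N] = (alpha e < k)%N.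
Proof.
move=> n0; apply/forallP/idP => h.
- have k0 : (0 < k)%N by exact: (leq_ltn_trans (leq0n _) (h (Ordinal n0))).
  have : (alpha e <= k.-1)%N.
    by apply/bigmax_leqP => i _; rewrite -ltnS prednK // h.
  by rewrite -ltnS prednK.
- by move=> j; apply: leq_ltn_trans h; apply: leq_bigmax.
Qed.

End Comb.

Section Tele.
Variable R : comRingType.
Local Open Scope ring_scope.

Lemma tele1 (U : R) a b : (b <= a.+1)%N ->
  (1 - U) * \sum_(b <= k < a.+1) U ^+ (a - k) = 1 - U ^+ (a.+1 - b).
Proof.
move=> hb; rewrite mulr_sumr (telescope_sumr_eq (fun k => U ^+ (a.+1 - k))) //.
  by rewrite subnn expr0.
move=> k /andP[_ hk]; rewrite subSS subSn // exprS; ring.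
Qed.

Lemma tele2 (U V : R) a b n : (b <= a)%N -> (a <= n.+1)%N ->
  (U - V) * \sum_(a <= k < n.+1) U ^+ (k.+1 - b) * V ^+ (n.+1 - k) =
  U ^+ (n.+2 - b) * V - U ^+ (a.+1 - b) * V ^+ (n.+2 - a).
Proof.
move=> hb ha.
rewrite mulr_sumr (telescope_sumr_eq (fun k => U ^+ (k.+1 - b) * V ^+ (n.+2 - k))) //.
  by rewrite subSS subSnn expr1.
move=> k /andP[hk1 hk2].
have e1 : (k.+2 - b = (k.+1 - b).+1)%N by rewrite subSn // ltnW // ltnS (leq_trans hb hk1).
have e2 : (n.+2 - k = (n.+1 - k).+1)%N by rewrite subSn // ltnW.
rewrite e1 e2 subSS !exprS; ring.
Qed.

End Tele.


Section Level.
Variable R : comNzRingType.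
Local Open Scope ring_scope.

Lemma level_step n (U V : R) (e : {ffun 'I_n -> 'I_n}) : (0 < n)%N ->
  (1 - U) * (U - V) * \sum_(k : 'I_n.+1 | (beta1 e <= k)%N)
       U ^+ par_p (ext e k) * V ^+ par_q (ext e k) =
  V * (U - V) * (V ^+ par_q e - U ^+ par_p e * V ^+ par_q e) +
  U * V * (1 - U) * (U ^+ (par_p e + par_q e) - U ^+ par_p e * V ^+ par_q e).
Proof.
move=> n0.
have ha := alpha_lt e n0; have hb := beta1_le e.
rewrite /par_p /par_q.
set a := alpha e; set b := beta1 e.
pose f k := if (k <= a)%N then U ^+ (a - k) * V ^+ (n.+1 - a)
            else U ^+ (k.+1 - b) * V ^+ (n.+1 - k).
rewrite (eq_bigr (fun k : 'I_n.+1 => f (val k))); last first.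
  move=> k hk; rewrite alpha_ext beta1_ext forall_lt // /f -/a -/b.
  case: leqP => hka.
  - by rewrite (maxn_idPr (leqW hk)) subSS.
  - by rewrite maxn0.
have -> : \sum_(k < n.+1 | (b <= k)%N) f k = \sum_(b <= k < n.+1) f k.
  by rewrite big_geq_mkord.
rewrite (big_cat_nat _ (n := a.+1)) //=; last by rewrite ltnS ltnW.
rewrite (eq_big_nat _ _ (m := b) (F2 := fun k => U ^+ (a - k) * V ^+ (n.+1 - a))); last first.
  by move=> k /andP[_ hk]; rewrite /f -ltnS hk.
rewrite (eq_big_nat _ _ (m := a.+1) (F2 := fun k => U ^+ (k.+1 - b) * V ^+ (n.+1 - k))); last first.
  by move=> k /andP[hk _]; rewrite /f leqNgt hk.
rewrite -mulr_suml.
set S1 := \sum_(b <= i < a.+1) _; set S2 := \sum_(a.+1 <= i < n.+1) _.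
have T1 : (1 - U) * S1 = 1 - U ^+ (a.+1 - b) by apply: tele1.
have T2 : (U - V) * S2 = U ^+ (n.+2 - b) * V - U ^+ (a.+2 - b) * V ^+ (n.+2 - a.+1).
  by apply: tele2 => //; apply: ltnW.
have -> : (1 - U) * (U - V) * (S1 * V ^+ (n.+1 - a) + S2) =
   (U - V) * V ^+ (n.+1 - a) * ((1 - U) * S1) + (1 - U) * ((U - V) * S2) by ring.
rewrite T1 T2.
have e1 : (n.+1 - a = (n - a).+1)%N by lia.
have e2 : (n.+2 - b = (a.+1 - b + (n - a)).+1)%N by lia.
have e3 : (a.+2 - b = (a.+1 - b).+1)%N by lia.
have e4 : (n.+2 - a.+1 = (n - a).+1)%N by lia.
rewrite e1 e2 e3 e4.
move: (a.+1 - b)%N (n - a)%N => p q.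
rewrite !exprS exprD.
move: (U ^+ p) (U ^+ q) (V ^+ q) => X1 X2 X3.
ring.
Qed.

Definition Ev n (U V : R) : R :=
  \sum_(e : {ffun 'I_n -> 'I_n} | [&& (0 < n)%N, is_invseq e & avoids_gege e])
     U ^+ par_p e * V ^+ par_q e.

Lemma Ev0 (U V : R) : Ev 0 U V = 0.
Proof. by rewrite /Ev big_pred0. Qed.

Lemma Ev_rec n (U V : R) : (0 < n)%N ->
  (1 - U) * (U - V) * Ev n.+1 U V =
  V * (U - V) * (Ev n 1 V - Ev n U V) + U * V * (1 - U) * (Ev n U U - Ev n U V).
Proof.
move=> n0; rewrite /Ev /= (decomp (fun e' => U ^+ par_p e' * V ^+ par_q e')).
rewrite mulr_sumr -!sumrB !mulr_sumr -big_split /=.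
apply: eq_big => [e|e /andP[_ _]]; first by rewrite n0.
rewrite level_step // expr1n mul1r -exprD; ring.
Qed.

Lemma Ev1 (U V : R) : Ev 1 U V = U * V.
Proof.
rewrite /Ev /= (decomp (fun e' => U ^+ par_p e' * V ^+ par_q e')).
pose e0 : {ffun 'I_0 -> 'I_0} := [ffun i => i].
have he : forall e : {ffun 'I_0 -> 'I_0}, e = e0 by move=> e; apply/ffunP => -[].
rewrite (big_pred1 e0); last first.
  move=> e /=; rewrite [e]he eqxx /is_invseq /avoids_gege.
  by apply/andP; split; apply/forallP => -[].
have hb : beta1 e0 = 0%N by rewrite /beta1 big_mkcond big_ord0.
rewrite hb big_mkcond big_ord1 /= /par_p /par_q alpha_ext beta1_ext.
have -> : alpha e0 = 0%N by rewrite /alpha big_ord0.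
rewrite hb.
have -> : [forall j : 'I_0, (e0 j < @ord0 0)%N] = true by apply/forallP => -[].
by rewrite /= !expr1.
Qed.

End Level.

Local Open Scope ring_scope.

Section Eqm.
Variable K : fieldType.
Local Notation P := {poly K}.

Definition eqm (m : nat) (p q : P) := forall i, (i < m)%N -> p`_i = q`_i.

Lemma eqm_refl m p : eqm m p p. Proof. by []. Qed.
Lemma eqm_sym m p q : eqm m p q -> eqm m q p.
Proof. by move=> h i hi; rewrite h. Qed.
Lemma eqm_trans m p q r : eqm m p q -> eqm m q r -> eqm m p r.
Proof. by move=> h1 h2 i hi; rewrite h1 ?h2. Qed.
Lemma eqmD m p q p' q' : eqm m p q -> eqm m p' q' -> eqm m (p + p') (q + q').
Proof. by move=> h1 h2 i hi; rewrite !coefD h1 ?h2. Qed.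
Lemma eqmN m p q : eqm m p q -> eqm m (- p) (- q).
Proof. by move=> h i hi; rewrite !coefN h. Qed.
Lemma eqmB m p q p' q' : eqm m p q -> eqm m p' q' -> eqm m (p - p') (q - q').
Proof. by move=> h1 h2; apply: eqmD => //; apply: eqmN. Qed.
Lemma eqm_congr m p q p' q' : p = p' -> q = q' -> eqm m p q -> eqm m p' q'.
Proof. by move=> -> ->. Qed.
Lemma eqmMl m r p q : eqm m p q -> eqm m (r * p) (r * q).
Proof.
move=> h i hi; rewrite !coefM; apply: eq_bigr => j _; rewrite h //.
by apply: leq_ltn_trans hi; apply: leq_subr.
Qed.
Lemma eqm_eq m p q : p = q -> eqm m p q. Proof. by move->. Qed.
Lemma eqm_le m m' p q : (m' <= m)%N -> eqm m p q -> eqm m' p q.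
Proof. by move=> hm h i hi; apply: h; apply: leq_trans hm. Qed.

Lemma eqm_sub0 m p q : eqm m (p - q) 0 -> eqm m p q.
Proof. by move=> h i hi; apply/eqP; rewrite -subr_eq0 -coefB h // coef0. Qed.
Lemma eqm_0sub m p q : eqm m p q -> eqm m (p - q) 0.
Proof. by move=> h i hi; rewrite coefB h // subrr coef0. Qed.

Lemma eqm_Xn m p : eqm m ('X^m * p) 0.
Proof. by move=> i hi; rewrite coefXnM hi coef0. Qed.

Lemma eqm_shift m p : eqm m.+1 ('X * p) 0 -> eqm m p 0.
Proof. by move=> h i hi; have := h i.+1 hi; rewrite coefXM !coef0. Qed.

Lemma eqm_cancel m (c q : P) : c`_0 != 0 -> eqm m (c * q) 0 -> eqm m q 0.
Proof.
move=> c0 h; elim/ltn_ind => i IH hi; rewrite coef0.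
have := h i hi; rewrite coef0 coefM big_ord_recl /= subn0 big1 ?addr0.
  by move/eqP; rewrite mulf_eq0 (negbTE c0) /= => /eqP.
move=> j _; have hj := ltn_ord j; rewrite IH ?coef0 ?mulr0 //; rewrite /bump /=; lia.
Qed.

End Eqm.

Section Kernel.
Variable K : fieldType.
Local Notation P := {poly K}.

Definition Etr M (U V : P) : P := \sum_(i < M) 'X^i * Ev i U V.

Lemma Ev_rec' n (U V : P) : (1 - U) * (U - V) * Ev n.+1 U V =
  (n == 0)%:R * (U * V * (1 - U) * (U - V)) + V * (U - V) * (Ev n 1 V - Ev n U V)
  + U * V * (1 - U) * (Ev n U U - Ev n U V).
Proof.
case: n => [|n]; first by rewrite Ev1 !Ev0 /=; ring.
by rewrite Ev_rec //= mul0r add0r.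
Qed.

Lemma KI M (U V : P) : (0 < M)%N -> (1 - U) * (U - V) * Etr M.+1 U V =
  'X * (U * V * (1 - U) * (U - V) + V * (U - V) * (Etr M 1 V - Etr M U V)
        + U * V * (1 - U) * (Etr M U U - Etr M U V)).
Proof.
move=> M0; rewrite /Etr big_ord_recl Ev0 mulr0 add0r mulr_sumr.
have -> : \sum_(i < M) (1 - U) * (U - V) * ('X^(bump 0 i) * Ev (bump 0 i) U V) =
  \sum_(i < M) 'X * ('X^i * (((i : nat) == 0%N)%:R * (U * V * (1 - U) * (U - V)))) +
  \sum_(i < M) 'X * ('X^i * (V * (U - V) * (Ev i 1 V - Ev i U V)
        + U * V * (1 - U) * (Ev i U U - Ev i U V))).
  rewrite -big_split; apply: eq_bigr => i _ /=.
  rewrite /bump /= add1n exprS.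
  transitivity ('X * 'X^i * ((1 - U) * (U - V) * Ev i.+1 U V)); first by ring.
  rewrite Ev_rec'; ring.
rewrite -!mulr_sumr -mulrDr; congr (_ * _).
case: M M0 => // M _; rewrite big_ord_recl /= big1 ?addr0; last first.
  by move=> i _; rewrite /bump /= add1n /= mul0r mulr0.
rewrite expr0 mul1r mul1r -addrA; congr (_ + _).
rewrite -!sumrB !mulr_sumr -big_split /=; apply: eq_bigr => i _; ring.
Qed.

Lemma KEY M (a b : P) : (0 < M)%N ->
  eqm M.+1 (a * b) ('X * (1 + a) * (1 + b) * (a + b)) ->
  ((1 + a) ^+ 2 * (1 + b))`_0 != 0 ->
  eqm M (b * Etr M 1 ((1 + a) * (1 + b)) + a * Etr M (1 + a) (1 + a)) (a * b * (1 + a)).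
Proof.
move=> M0 hc hc0.
have hKI := KI (1 + a) ((1 + a) * (1 + b)) M0.
have hE : Etr M.+1 (1 + a) ((1 + a) * (1 + b)) = Etr M (1 + a) ((1 + a) * (1 + b)) +
   'X^M * Ev M (1 + a) ((1 + a) * (1 + b)) by rewrite /Etr big_ord_recr.
move: hKI hE.
move: (Etr M.+1 (1 + a) ((1 + a) * (1 + b))) (Etr M (1 + a) ((1 + a) * (1 + b)))
  (Etr M 1 ((1 + a) * (1 + b))) (Etr M (1 + a) (1 + a)) (Ev M (1 + a) ((1 + a) * (1 + b)))
  => E' E G D Z hKI hE.
have hN0 : eqm M.+1 ((1 + a) * (a * b - 'X * (1 + a) * (1 + b) * (a + b))) 0.
  by apply: (eqm_congr (erefl _) (mulr0 (1 + a))); apply: eqmMl; apply: eqm_0sub.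
have h1 : eqm M.+1 (E' * ((1 + a) * (a * b - 'X * (1 + a) * (1 + b) * (a + b)))) 0.
  by apply: (eqm_congr (erefl _) (mulr0 E')); apply: eqmMl.
set W := (1 + a) * (1 + a) * (1 + b) * (-a) * (-(1 + a) * b) + (1 + a) * (1 + b) * (-(1 + a) * b) * G
   + (1 + a) * ((1 + a) * (1 + b)) * (-a) * D.
have h2 : E' * ((1 + a) * (a * b - 'X * (1 + a) * (1 + b) * (a + b))) =
  'X * W + 'X^(M.+1) * (((1 + a) * (1 + b) * (-(1 + a) * b) + (1 + a) * ((1 + a) * (1 + b)) * (-a)) * Z).
  have -> : E' * ((1 + a) * (a * b - 'X * (1 + a) * (1 + b) * (a + b))) =
    (1 - (1 + a)) * ((1 + a) - (1 + a) * (1 + b)) * E' +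
    'X * ((1 + a) * (1 + b) * ((1 + a) - (1 + a) * (1 + b)) + (1 + a) * ((1 + a) * (1 + b)) * (1 - (1 + a))) * E'
    by ring.
  rewrite hKI hE exprS /W; ring.
have h3 : eqm M.+1 ('X * W) 0.
  have := eqmB h1 (@eqm_Xn _ M.+1 (((1 + a) * (1 + b) * (-(1 + a) * b) + (1 + a) * ((1 + a) * (1 + b)) * (-a)) * Z)).
  by apply: eqm_congr; [rewrite h2; ring | rewrite subr0].
have h4 := eqm_shift h3.
have hW : W = (1 + a) ^+ 2 * (1 + b) * (a * b * (1 + a) - b * G - a * D) by rewrite /W; ring.
rewrite hW in h4; have h5 := eqm_cancel hc0 h4.
apply: eqm_sub0; move/eqmN: h5; apply: eqm_congr; [ring | by rewrite oppr0].
Qed.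

Lemma EQS M (a b : P) : (0 < M)%N ->
  eqm M.+1 (a * b) ('X * (1 + a) * (1 + b) * (a + b)) ->
  ((1 + a) ^+ 2 * (1 + b))`_0 != 0 -> ((1 + b) ^+ 2 * (1 + a))`_0 != 0 ->
  eqm M (a ^+ 2 * Etr M (1 + a) (1 + a) - b ^+ 2 * Etr M (1 + b) (1 + b))
        (a * b * (a * (1 + a) - b * (1 + b))).
Proof.
move=> M0 hc h0 h0'.
have k1 := KEY M0 hc h0.
have hc' : eqm M.+1 (b * a) ('X * (1 + b) * (1 + a) * (b + a)).
  by move: hc; apply: eqm_congr; ring.
have k2 := KEY M0 hc' h0'.
rewrite [(1 + b) * (1 + a)]mulrC in k2.
have := eqmB (eqmMl a k1) (eqmMl b k2).
by apply: eqm_congr; ring.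
Qed.

End Kernel.

Local Open Scope ring_scope.

Lemma Ev_morph (R S : comNzRingType) (phi : {rmorphism R -> S}) n (U V : R) :
  phi (Ev n U V) = Ev n (phi U) (phi V).
Proof.
rewrite /Ev rmorph_sum; apply: eq_bigr => e _.
by rewrite rmorphM !rmorphXn.
Qed.

Section Gen.
Variable K : fieldType.
Variable x : K.
Hypothesis hx0 : x != 0.
Hypothesis hx1 : 1 + x != 0.
Variable Y : nat -> K.
Hypothesis hY0 : Y 0%N = 0.
Hypothesis hYS : forall j, Y j.+1 = (1 + x^-1) *
  \sum_(i < j.+1) (((i : nat) == 0%N)%:R + Y i) * ((if (j - i)%N is 0%N then x else 0) + Y (j - i)%N).

Local Notation P := {poly K}.
Local Notation xP := (x%:P : P).
Local Notation xbP := (x^-1%:P : P).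

Lemma hxb1 : 1 + x^-1 != 0.
Proof.
apply/eqP => h; have : x * (1 + x^-1) = x + 1 by rewrite mulrDr mulfV // mulr1.
by rewrite h mulr0 => /esym /eqP; rewrite addrC (negbTE hx1).
Qed.

Lemma hxx : xP * xbP = 1.
Proof. by rewrite -polyCM mulfV // polyC1. Qed.

Lemma modx (A B C : P) : A = B + (xP * xbP - 1) * C -> A = B.
Proof. by move=> ->; rewrite hxx subrr mul0r addr0. Qed.

Definition Yp M : P := locked (\poly_(i < M.+1) Y i).

Lemma coefYp M i : (i <= M)%N -> (Yp M)`_i = Y i.
Proof. by move=> h; rewrite /Yp -lock coef_poly ltnS h. Qed.

Lemma Yp0 M : (Yp M)`_0 = 0.
Proof. by rewrite coefYp. Qed.

Lemma C0 M : eqm M.+1 (Yp M) ('X * ((1 + x^-1)%:P * ((1 + Yp M) * (xP + Yp M)))).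
Proof.
move=> i hi; rewrite coefXM; case: i hi => [|j] hj /=; first by rewrite Yp0.
rewrite coefYp // hYS coefCM coefM; congr (_ * _).
apply: eq_bigr => l _.
have hj' : (j <= M)%N by exact: (ltnW hj).
have hl : (l <= M)%N by exact: (@leq_trans j l M (ltn_ord l) hj').
have hjl : (j - l <= M)%N by exact: (leq_trans (leq_subr l j) hj').
rewrite !coefD coef1 coefC !coefYp //.
by case: (j - l)%N.
Qed.

Lemma C1 M : eqm M.+1 (xP * Yp M) ('X * (1 + xP) * (1 + Yp M) * (xP + Yp M)).
Proof.
have := eqmMl xP (@C0 M); apply: eqm_congr => //.
rewrite polyCD polyC1; set YY := Yp M.
apply: (@modx _ _ (YY * 'X + YY ^+ 2 * 'X + xP * 'X + xP * YY * 'X)); ring.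
Qed.

Lemma C2 M : eqm M.+1 (Yp M * (xbP * Yp M))
  ('X * (1 + Yp M) * (1 + xbP * Yp M) * (Yp M + xbP * Yp M)).
Proof.
have := eqmMl (xbP ^+ 2 * Yp M) (@C1 M); set YY := Yp M; apply: eqm_congr.
  by apply: (@modx _ _ (xbP * YY ^+ 2)); ring.
apply: (@modx _ _ (YY * 'X + YY ^+ 2 * 'X + xbP * YY * 'X + 2%:R * xbP * YY ^+ 2 * 'X + xbP * YY ^+ 3 * 'X + xP * xbP * YY * 'X + xP * xbP * YY ^+ 2 * 'X)); ring.
Qed.

Lemma C3 M : eqm M.+1 (xbP * Yp M * xbP)
  ('X * (1 + xbP * Yp M) * (1 + xbP) * (xbP * Yp M + xbP)).
Proof.
have := eqmMl (xbP ^+ 3) (@C1 M); set YY := Yp M; apply: eqm_congr.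
  by apply: (@modx _ _ (xbP ^+ 2 * YY)); ring.
apply: (@modx _ _ (xbP * 'X + xbP * YY * 'X + xbP ^+ 2 * 'X + 2%:R * xbP ^+ 2 * YY * 'X + xbP ^+ 2 * YY ^+ 2 * 'X + xP * xbP ^+ 2 * 'X + xP * xbP ^+ 2 * YY * 'X)); ring.
Qed.

Lemma c0 (a b : P) : ((1 + a) ^+ 2 * (1 + b))`_0 = (1 + a`_0) ^+ 2 * (1 + b`_0).
Proof. by rewrite coef0M expr2 coef0M !coefD coef1. Qed.

Definition Rp M : P :=
  (x + 1 - x^-1 ^+ 5 - x^-1 ^+ 6)%:P * Yp M + (x^-1 ^+ 5 - x^-1)%:P * (Yp M * Yp M)
  + ((x^-1 ^+ 3 + x^-1 ^+ 6 - x^-1 - x^-1 ^+ 4)%:P * (Yp M * Yp M * Yp M)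
  + (x^-1 ^+ 3 - x^-1 ^+ 5)%:P * (Yp M * Yp M * Yp M * Yp M)).

Lemma MAIN M : (0 < M)%N ->
  eqm M (xP ^+ 2 * Etr M (1 + xP) (1 + xP) - xbP ^+ 2 * Etr M (1 + xbP) (1 + xbP))
        (xP ^+ 2 * Rp M).
Proof.
move=> M0.
have nz1 : (1 + x) ^+ 2 * (1 + 0) != 0 by rewrite addr0 mulr1 expf_neq0.
have nz2 : (1 + 0) ^+ 2 * (1 + x) != 0 by rewrite addr0 expr1n mul1r.
have nz3 : (1 + 0) ^+ 2 * (1 + x^-1 * 0) != 0 by rewrite mulr0 addr0 expr1n mul1r oner_eq0.
have nz4 : (1 + x^-1 * 0) ^+ 2 * (1 + 0) != 0 by rewrite mulr0 addr0 expr1n mul1r oner_eq0.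
have nz5 : (1 + x^-1 * 0) ^+ 2 * (1 + x^-1) != 0 by rewrite mulr0 addr0 expr1n mul1r hxb1.
have nz6 : (1 + x^-1) ^+ 2 * (1 + x^-1 * 0) != 0 by rewrite mulr0 addr0 mulr1 expf_neq0 // hxb1.
have E1 := EQS M0 (@C1 M) ltac:(by rewrite c0 coefC Yp0) ltac:(by rewrite c0 coefC Yp0).
have E2 := EQS M0 (@C2 M) ltac:(by rewrite c0 coefCM Yp0) ltac:(by rewrite c0 coefCM Yp0).
have E3 := EQS M0 (@C3 M) ltac:(by rewrite c0 coefCM coefC Yp0) ltac:(by rewrite c0 coefCM coefC Yp0).
have := eqmD (eqmD E1 E2) E3; apply: eqm_congr; first by ring.
rewrite /Rp !(rmorphB, rmorphD, rmorphXn, rmorph1); set YY := Yp M.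
apply: (@modx _ _ (- xbP * YY ^+ 3 - xbP * YY ^+ 4 + xbP ^+ 2 * YY ^+ 3 + xbP ^+ 3 * YY - xbP ^+ 3 * YY ^+ 2 + xbP ^+ 3 * YY ^+ 4 + xbP ^+ 4 * YY - xbP ^+ 4 * YY ^+ 3 + xP * YY ^+ 2 + xP * YY ^+ 3 - xP * xbP ^+ 2 * YY ^+ 3 - xP * xbP ^+ 2 * YY ^+ 4 + xP * xbP ^+ 3 * YY ^+ 3 + xP * xbP ^+ 4 * YY - xP * xbP ^+ 4 * YY ^+ 2 + xP * xbP ^+ 4 * YY ^+ 4 + xP * xbP ^+ 5 * YY - xP * xbP ^+ 5 * YY ^+ 3)); ring.
Qed.

Definition sm (a b : nat -> K) : nat -> K := fun n => \sum_(i < n.+1) a i * b (n - i)%N.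

Definition RK n : K :=
  let Y2 := sm Y Y in let Y3 := sm Y2 Y in let Y4 := sm Y3 Y in
  ((x + 1 - x^-1 ^+ 5 - x^-1 ^+ 6) * Y n + (x^-1 ^+ 5 - x^-1) * Y2 n) +
  ((x^-1 ^+ 3 + x^-1 ^+ 6 - x^-1 - x^-1 ^+ 4) * Y3 n + (x^-1 ^+ 3 - x^-1 ^+ 5) * Y4 n).

Lemma coef_sm (p q : P) a b N : (forall i, (i <= N)%N -> p`_i = a i) ->
  (forall i, (i <= N)%N -> q`_i = b i) -> forall i, (i <= N)%N -> (p * q)`_i = sm a b i.
Proof.
move=> hp hq i hi; rewrite coefM /sm; apply: eq_bigr => j _.
have hj : (j <= N)%N by exact: (@leq_trans i j N (ltn_ord j) hi).
by rewrite hp // hq //; apply: leq_trans hi; apply: leq_subr.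
Qed.

Lemma Rp_coef M n : (n <= M)%N -> (Rp M)`_n = RK n.
Proof.
move=> hn.
have h1 : forall i, (i <= M)%N -> (Yp M)`_i = Y i by move=> i hi; rewrite coefYp.
have h2 := coef_sm h1 h1.
have h3 := coef_sm h2 h1.
have h4 := coef_sm h3 h1.
by rewrite /Rp /RK !coefD !coefCM h1 // h2 // h3 // h4.
Qed.

Lemma Etr_C M (c d : K) n : (n < M)%N -> (Etr M c%:P d%:P)`_n = Ev n c d.
Proof.
move=> hn; rewrite /Etr coef_sum (bigD1 (Ordinal hn)) //= big1 ?addr0.
  by rewrite -(Ev_morph (@polyC K)) coefXnM ltnn subnn coefC.
move=> i hi; rewrite -(Ev_morph (@polyC K)) coefXnM coefC.
case: ltnP => // hin; case: eqP => // /eqP; rewrite subn_eq0 => hni.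
by move: hi; rewrite -val_eqE /= eqn_leq hin hni.
Qed.

Lemma FINAL n : RK n = Ev n (1 + x) (1 + x) - x^-1 ^+ 4 * Ev n (1 + x^-1) (1 + x^-1).
Proof.
have h := MAIN (M := n.+1) isT (ltnSn n).
have e1 : 1 + xP = (1 + x)%:P by rewrite polyCD polyC1.
have e2 : 1 + xbP = (1 + x^-1)%:P by rewrite polyCD polyC1.
rewrite e1 e2 coefB -!rmorphXn !coefCM !Etr_C // Rp_coef // in h.
apply: (mulfI (expf_neq0 2 hx0)); rewrite -h; field; exact: hx0.
Qed.

End Gen.

Local Open Scope ring_scope.

Lemma xF_neq0 : xF != 0.
Proof. by rewrite /xF /toF tofrac_eq0 polyX_eq0. Qed.

Lemma onex_neq0 : 1 + xF != 0.
Proof.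
rewrite /xF /toF -(rmorph1 (@tofrac _)) -rmorphD tofrac_eq0.
apply/eqP => h; have := congr1 (fun p : {poly rat} => p`_1) h.
by rewrite coefD coef1 coefX coef0 /= add0r => /eqP; rewrite oner_eq0.
Qed.

Lemma Ecoef_Ev n : Ecoef n = Ev n ('X : {poly {poly rat}}) (('X : {poly rat})%:P).
Proof. by rewrite /Ecoef /Ev; apply: eq_bigr => e _; rewrite rmorphXn. Qed.

Lemma claimA n : toF (eval2 (Ecoef n) ('X + 1) ('X + 1)) = Ev n (1 + xF) (1 + xF).
Proof.
have -> : toF (eval2 (Ecoef n) ('X + 1) ('X + 1)) =
  (@tofrac _ \o horner_eval ('X + 1) \o map_poly (comp_poly ('X + 1))) (Ecoef n) by [].
rewrite Ecoef_Ev Ev_morph /= /horner_eval map_polyX map_polyC /= hornerX hornerC comp_polyX.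
by rewrite rmorphD rmorph1 addrC.
Qed.

Lemma claimB n : (map_poly (fun c : rat => toF c%:P)
    (- ('X ^+ 3 * Ev n (1 + 'X : {poly rat}) (1 + 'X)))).[xbF] =
  - (xbF ^+ 3 * Ev n (1 + xbF) (1 + xbF)).
Proof.
have -> : forall q : {poly rat}, (map_poly (fun c : rat => toF c%:P) q).[xbF] =
  (horner_eval xbF \o map_poly (@tofrac _ \o polyC)) q by [].
have eX : (horner_eval xbF \o map_poly (@tofrac _ \o polyC)) 'X = xbF.
  by rewrite /= /horner_eval map_polyX hornerX.
have e1 : (horner_eval xbF \o map_poly (@tofrac _ \o polyC)) (1 + 'X) = 1 + xbF.
  by rewrite rmorphD rmorph1; congr (1 + _); exact: eX.
rewrite rmorphN rmorphM rmorphXn Ev_morph; congr (- (_ * _)).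
  by congr (_ ^+ 3); exact: eX.
by congr (Ev n _ _); exact: e1.
Qed.

Unset Implicit Arguments.
Theorem theorem3p1 (Y : series) :
  Y_eq Y ->
  forall n : nat,
    is_PT (Rser Y n) (eval2 (Ecoef n) ('X + 1) ('X + 1)).
Proof.
move=> hY n.
have hY0 : Y 0%N = 0 by rewrite hY.
have hYS : forall j, Y j.+1 = (1 + xF^-1) *
  \sum_(i < j.+1) (((i : nat) == 0%N)%:R + Y i) *
     ((if (j - i)%N is 0%N then xF else 0) + Y (j - i)%N).
  move=> j; rewrite hY /stimes_t /sscale /smul /sadd.
  congr (_ * _); apply: eq_bigr => i _.
  by case: (nat_of_ord i) => [|k] /=; rewrite ?mulr1n ?mulr0n.
have hF := FINAL xF_neq0 onex_neq0 hY0 hYS n.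
exists (- ('X ^+ 3 * Ev n (1 + 'X : {poly rat}) (1 + 'X))).
rewrite claimA claimB.
have -> : Rser Y n = RK xF Y n by [].
rewrite hF /xbF; ring.
Qed.
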